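(* Let $(V,E)$ be a finite connected bipartite graph with sides $S_1,S_2$, every edge having weight $1$ (so $m(v)$ is the degree of $v$), and let $\mathbb{E}$ be a Banach space. Let $P_1,P_2,P_{1,2}$ be the operators on $\ell^2(E;\mathbb{E})$ defined below. Then $P_{1,2}P_i=P_iP_{1,2}=P_{1,2}$ for $i=1,2$, and $$\max\{\|P_1P_2-P_{1,2}\|,\|P_2P_1-P_{1,2}\|\}=\lambda^{\mathbb{E}}_{(V,E),\mathrm{bipartite}}.$$
   Context: $\ell^2(E;\mathbb{E})$ is the space of maps $\Phi:E\to\mathbb{E}$ with $\|\Phi\|^2=\sum_{e\in E}|\Phi(e)|^2$. For $i=1,2$ and an edge $\{v_1,v_2\}$ with $v_1\in S_1,v_2\in S_2$: $P_i\Phi(\{v_1,v_2\})=\frac1{m(v_i)}\sum_{\{v_i,u\}\in E}\Phi(\{v_i,u\})$; and $P_{1,2}\Phi\equiv\frac1{|E|}\sum_{e\in E}\Phi(e)$. $\ell^2(V,m;\mathbb{E})$ is the space of maps $\phi:V\to\mathbb{E}$ with $\|\phi\|^2=\sum_v m(v)|\phi(v)|^2$; the random walk is $(A\phi)(v)=\frac1{m(v)}\sum_{u:\{u,v\}\in E}\phi(u)$; $M_{\mathrm{sides}}\phi(u)=\frac1{m(S_i)}\sum_{w\in S_i}m(w)\phi(w)$ for $u\in S_i$, with $m(S_i)=\sum_{w\in S_i}m(w)$; and $\lambda^{\mathbb{E}}_{(V,E),\mathrm{bipartite}}$ is the operator norm of $A(I-M_{\mathrm{sides}})$ acting by these formulas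 on $\ell^2(V,m;\mathbb{E})$. *)

(* Defs.v *)
From HB Require Import structures.
From mathcomp Require Import all_boot all_order all_algebra.
From mathcomp Require Import all_classical all_reals all_analysis.
Set Implicit Arguments. Unset Strict Implicit. Unset Printing Implicit Defensive.
Import Order.TTheory GRing.Theory Num.Theory.
Import numFieldNormedType.Exports.
Local Open Scope classical_set_scope.
Local Open Scope ring_scope.

(* A bipartite simple graph with sides S1 = V1, S2 = V2 is given by a relation
   adj : V1 -> V2 -> bool; vertex set V = V1 + V2 (S1 = inl, S2 = inr);
   edge {v1,v2} (v1 in S1, v2 in S2) is represented by the pair (v1,v2). *)
Section Graph.
Variables (V1 V2 : finType) (adj : V1 -> V2 -> bool).

Definition edgeT : finType := {x : V1 * V2 | adj x.1 x.2}.

Definition vtx : finType := (V1 + V2)%type.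

Definition adjV : rel vtx := fun u v =>
  match u, v with
  | inl a, inr b => adj a b
  | inr b, inl a => adj a b
  | _, _ => false
  end.

Definition connected_graph : Prop := forall u v : vtx, connect adjV u v.

Definition mdeg (v : vtx) : nat := #|[set u | adjV v u]|.

Definition side (v : vtx) : bool := if v is inl _ then true else false.

Variables (R : realType) (E : normedModType R).

Definition opnorm (X : Type) (N : X -> R) (T : X -> X) : R :=
  sup [set N (T x) | x in [set x | N x <= 1]].

Definition l2E (Phi : edgeT -> E) : R := Num.sqrt (\sum_(e : edgeT) `|Phi e| ^+ 2).

Definition P1 (Phi : edgeT -> E) : edgeT -> E := fun e =>
  ((mdeg (inl (val e).1))%:R^-1 : R) *:
    \sum_(e' : edgeT | (val e').1 == (val e).1) Phi e'.

Definition P2 (Phi : edgeT -> E) : edgeT -> E := fun e =>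
  ((mdeg (inr (val e).2))%:R^-1 : R) *:
    \sum_(e' : edgeT | (val e').2 == (val e).2) Phi e'.

Definition P12 (Phi : edgeT -> E) : edgeT -> E := fun _ =>
  ((#|edgeT|)%:R^-1 : R) *: \sum_(e' : edgeT) Phi e'.

Definition l2V (phi : vtx -> E) : R :=
  Num.sqrt (\sum_(v : vtx) (mdeg v)%:R * `|phi v| ^+ 2).

Definition Awalk (phi : vtx -> E) : vtx -> E := fun v =>
  ((mdeg v)%:R^-1 : R) *: \sum_(u | adjV v u) phi u.

Definition Msides (phi : vtx -> E) : vtx -> E := fun u =>
  ((\sum_(w | side w == side u) (mdeg w)%:R)^-1 : R) *:
    \sum_(w | side w == side u) ((mdeg w)%:R : R) *: phi w.

Definition lambda_bip : R :=
  opnorm l2V (fun phi => Awalk (fun v => phi v - Msides phi v)).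

End Graph.

(* Main.v *)
Require Import Defs.
From HB Require Import structures.
From mathcomp Require Import all_boot all_order all_algebra.
From mathcomp Require Import all_classical all_reals all_analysis.
From mathcomp Require Import ring lra.
Set Implicit Arguments. Unset Strict Implicit. Unset Printing Implicit Defensive.
Import Order.TTheory GRing.Theory Num.Theory.
Local Open Scope classical_set_scope.
Local Open Scope ring_scope.

Section S.
Variables (V1 V2 : finType) (adj : V1 -> V2 -> bool) (R : realType) (E : normedModType R).
Local Notation ET := (edgeT adj).
Local Notation vt := (vtx V1 V2).
Local Notation m v := ((mdeg adj v)%:R : R).

Lemma sum_edge (M : nmodType) (F : V1*V2 -> M) :
  \sum_(e : ET) F (val e) = \sum_(x | adj x.1 x.2) F x.
Proof.
rewrite (reindex_omap (val : ET -> V1*V2) insub); last first.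
  by move=> x Hx; rewrite insubT.
apply: eq_bigl => e /=; rewrite valK eqxx andbT; have := valP e; by [].

Qed.

Lemma sum_star1 (M : nmodType) a (f : V2 -> M) :
  \sum_(e : ET | (val e).1 == a) f (val e).2 = \sum_(b | adj a b) f b.
Proof.
rewrite big_mkcond /= (sum_edge (fun x => if x.1 == a then f x.2 else 0)).
rewrite -(pair_big_dep xpredT (fun i j => adj i j) (fun i j => if i == a then f j else 0)) /=.
rewrite (bigD1 a) //= [X in _ + X]big1 ?addr0; last first.
  by move=> i /negbTE Hi; apply: big1 => j _; rewrite Hi.
by apply: eq_bigr => b _; rewrite eqxx.
Qed.

Lemma sum_star2 (M : nmodType) b (f : V1 -> M) :
  \sum_(e : ET | (val e).2 == b) f (val e).1 = \sum_(a | adj a b) f a.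
Proof.
rewrite big_mkcond /= (sum_edge (fun x => if x.2 == b then f x.1 else 0)).
rewrite -(pair_big_dep xpredT (fun i j => adj i j) (fun i j => if j == b then f i else 0)) /=.
rewrite [RHS]big_mkcond /=; apply: eq_bigr => a _.
rewrite big_mkcond (bigD1 b) //= [X in _ + X]big1 ?addr0; last first.
  by move=> j /negbTE Hj; rewrite Hj; case: (adj a j).
by rewrite eqxx.
Qed.

Lemma sum_adjL (M : nmodType) a (g : vt -> M) :
  \sum_(u | adjV adj (inl a) u) g u = \sum_(b | adj a b) g (inr b).
Proof. by rewrite big_sumType /= big_pred0 // add0r. Qed.

Lemma sum_adjR (M : nmodType) b (g : vt -> M) :
  \sum_(u | adjV adj (inr b) u) g u = \sum_(a | adj a b) g (inl a).
Proof. by rewrite big_sumType /= [X in _ + X]big_pred0 // addr0. Qed.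

Lemma mdegL a : m (inl a) = \sum_(b | adj a b) (1:R).
Proof.
rewrite /mdeg -(sum_adjL _ (fun _ => (1:R))) sumr_const; congr (_ *+ _).
by apply: eq_card => u; rewrite !unfold_in /= asboolb.
Qed.

Lemma mdegR b : m (inr b) = \sum_(a | adj a b) (1:R).
Proof.
rewrite /mdeg -(sum_adjR _ (fun _ => (1:R))) sumr_const; congr (_ *+ _).
by apply: eq_card => u; rewrite !unfold_in /= asboolb.
Qed.


Lemma cnt1 a : \sum_(e : ET | (val e).1 == a) (1:R) = m (inl a).
Proof. by rewrite (sum_star1 a (fun _ => (1:R))) mdegL. Qed.

Lemma cnt2 b : \sum_(e : ET | (val e).2 == b) (1:R) = m (inr b).
Proof. by rewrite (sum_star2 b (fun _ => (1:R))) mdegR. Qed.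

Lemma part1 (M : nmodType) (G : ET -> M) :
  \sum_(e : ET) G e = \sum_a \sum_(e : ET | (val e).1 == a) G e.
Proof. by rewrite (partition_big (fun e : ET => (val e).1) xpredT). Qed.

Lemma part2 (M : nmodType) (G : ET -> M) :
  \sum_(e : ET) G e = \sum_b \sum_(e : ET | (val e).2 == b) G e.
Proof. by rewrite (partition_big (fun e : ET => (val e).2) xpredT). Qed.

Lemma m1_gt0 (e : ET) : 0 < m (inl (val e).1).
Proof.
rewrite mdegL (bigD1 (val e).2) /=; last by have := valP e.
by apply: (lt_le_trans ltr01); rewrite lerDl sumr_ge0.
Qed.

Lemma m2_gt0 (e : ET) : 0 < m (inr (val e).2).
Proof.
rewrite mdegR (bigD1 (val e).1) /=; last by have := valP e.
by apply: (lt_le_trans ltr01); rewrite lerDl sumr_ge0.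
Qed.

Lemma empty_sum (P : pred ET) (M : nmodType) (G : ET -> M) :
  \sum_(e | P e) (1:R) = 0 -> \sum_(e | P e) G e = 0.
Proof.
rewrite sumr_const => /eqP; rewrite pnatr_eq0 => /eqP H.
by rewrite big_pred0 // => e; have := card0_eq H e.
Qed.

Lemma cardET : \sum_(e : ET) (1:R) = #|ET|%:R.
Proof. by rewrite sumr_const. Qed.

Lemma cs (I : finType) (P : pred I) (x : I -> R) :
  (\sum_(i | P i) x i) ^+ 2 <= (\sum_(i | P i) 1) * \sum_(i | P i) x i ^+ 2.
Proof.
have H1 : (\sum_(i | P i) x i) ^+ 2 = \sum_(i | P i) \sum_(j | P j) x i * x j.
  by rewrite expr2 mulr_suml; apply: eq_bigr => i _; rewrite mulr_sumr.
have H2 : (\sum_(i | P i) 1) * \sum_(i | P i) x i ^+ 2 =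
    \sum_(i | P i) \sum_(j | P j) x j ^+ 2.
  by rewrite mulr_suml; apply: eq_bigr => i _; rewrite mul1r.
have H3 : (\sum_(i | P i) 1) * \sum_(i | P i) x i ^+ 2 =
    \sum_(i | P i) \sum_(j | P j) x i ^+ 2.
  by rewrite H2 exchange_big.
set X := (\sum_(i | P i) x i) ^+ 2.
set Y := (\sum_(i | P i) 1) * \sum_(i | P i) x i ^+ 2.
have : X + X <= Y + Y.
  rewrite /X /Y H1 [X in _ <= X + _]H3 H2 -!big_split /=.
  apply: ler_sum => i _; rewrite -!big_split /=; apply: ler_sum => j _.
  have := sqr_ge0 (x i - x j); rewrite sqrrB; lra.
lra.
Qed.


Definition T12 (Phi : ET -> E) : ET -> E := fun e => P1 (P2 Phi) e - P12 Phi e.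
Definition T21 (Phi : ET -> E) : ET -> E := fun e => P2 (P1 Phi) e - P12 Phi e.
Definition Lam (phi : vt -> E) : vt -> E :=
  Awalk adj (fun v => phi v - Msides adj phi v).

Definition H2 (phi : vt -> E) (Phi : ET -> E) := forall b, m (inr b) != 0 ->
  phi (inr b) = (m (inr b))^-1 *: \sum_(e : ET | (val e).2 == b) Phi e.
Definition H1 (phi : vt -> E) (Phi : ET -> E) := forall a, m (inl a) != 0 ->
  phi (inl a) = (m (inl a))^-1 *: \sum_(e : ET | (val e).1 == a) Phi e.

Lemma sumTF (M : nmodType) (I : finType) (F : I -> M) :
  \sum_(i | true == false) F i = 0.
Proof. by rewrite big_pred0. Qed.
Lemma sumFF (M : nmodType) (I : finType) (F : I -> M) :
  \sum_(i | false == false) F i = \sum_i F i.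
Proof. by apply: eq_bigl. Qed.
Lemma sumFT (M : nmodType) (I : finType) (F : I -> M) :
  \sum_(i | false == true) F i = 0.
Proof. by rewrite big_pred0. Qed.
Lemma sumTT (M : nmodType) (I : finType) (F : I -> M) :
  \sum_(i | true == true) F i = \sum_i F i.
Proof. by apply: eq_bigl. Qed.

Lemma M_inr phi Phi : H2 phi Phi -> forall b e, Msides adj phi (inr b) = P12 Phi e.
Proof.
move=> H b e; rewrite /Msides /P12 /=.
rewrite !big_sumType /= !sumTF !sumFF !add0r.
have -> : \sum_(i | true) (mdeg adj (inr i))%:R = (#|ET|%:R : R).
  by rewrite -cardET (part2 (fun _ => (1:R))); apply: eq_bigr => i _; rewrite cnt2.
congr (_ *: _); rewrite (part2 Phi); apply: eq_bigr => i _.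
have [m0|mn0] := eqVneq (m (inr i)) 0.
  by rewrite m0 scale0r empty_sum // cnt2.
by rewrite H // scalerA divff // scale1r.
Qed.


Lemma M_inl phi Phi : H1 phi Phi -> forall a e, Msides adj phi (inl a) = P12 Phi e.
Proof.
move=> H a e; rewrite /Msides /P12 /=.
rewrite !big_sumType /= !sumTT !sumFT !addr0.
have -> : \sum_i (mdeg adj (inl i))%:R = (#|ET|%:R : R).
  by rewrite -cardET (part1 (fun _ => (1:R))); apply: eq_bigr => i _; rewrite cnt1.
congr (_ *: _); rewrite (part1 Phi); apply: eq_bigr => i _.
have [m0|mn0] := eqVneq (m (inl i)) 0.
  by rewrite m0 scale0r empty_sum // cnt1.
by rewrite H // scalerA divff // scale1r.
Qed.

Lemma A_inl phi Phi (e : ET) : H2 phi Phi -> T12 Phi e = Lam phi (inl (val e).1).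
Proof.
move=> H; rewrite /T12 /Lam /Awalk /P1 sum_adjL sumrB.
set a := (val e).1.
have -> : \sum_(e' : ET | (val e').1 == a) P2 Phi e' =
          \sum_(e' : ET | (val e').1 == a) phi (inr (val e').2).
  apply: eq_bigr => e' _; rewrite /P2 H //; exact: lt0r_neq0 (m2_gt0 e').
rewrite (sum_star1 a (fun b => phi (inr b))).
have -> : \sum_(b | adj a b) Msides adj phi (inr b) = \sum_(b | adj a b) P12 Phi e.
  by apply: eq_bigr => b _; rewrite (M_inr H b e).
rewrite -[X in \sum_(b | adj a b) X]scale1r -scaler_suml -mdegL scalerBr scalerA.
by rewrite mulVf ?scale1r //; exact: lt0r_neq0 (m1_gt0 e).
Qed.

Lemma A_inr phi Phi (e : ET) : H1 phi Phi -> T21 Phi e = Lam phi (inr (val e).2).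
Proof.
move=> H; rewrite /T21 /Lam /Awalk /P2 sum_adjR sumrB.
set b := (val e).2.
have -> : \sum_(e' : ET | (val e').2 == b) P1 Phi e' =
          \sum_(e' : ET | (val e').2 == b) phi (inl (val e').1).
  apply: eq_bigr => e' _; rewrite /P1 H //; exact: lt0r_neq0 (m1_gt0 e').
rewrite (sum_star2 b (fun a => phi (inl a))).
have -> : \sum_(a | adj a b) Msides adj phi (inl a) = \sum_(a | adj a b) P12 Phi e.
  by apply: eq_bigr => a _; rewrite (M_inl H a e).
rewrite -[X in \sum_(a | adj a b) X]scale1r -scaler_suml -mdegR scalerBr scalerA.
by rewrite mulVf ?scale1r //; exact: lt0r_neq0 (m2_gt0 e).
Qed.

Definition X1 (phi : vt -> E) := \sum_a m (inl a) * `|Lam phi (inl a)| ^+ 2.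
Definition X2 (phi : vt -> E) := \sum_b m (inr b) * `|Lam phi (inr b)| ^+ 2.

Lemma sum_const1 (a : V1) (K : R) : \sum_(e : ET | (val e).1 == a) K = m (inl a) * K.
Proof. by rewrite -cnt1 mulr_suml; apply: eq_bigr => *; rewrite mul1r. Qed.
Lemma sum_const2 (b : V2) (K : R) : \sum_(e : ET | (val e).2 == b) K = m (inr b) * K.
Proof. by rewrite -cnt2 mulr_suml; apply: eq_bigr => *; rewrite mul1r. Qed.

Lemma l2E_T12 phi Phi : H2 phi Phi -> l2E (T12 Phi) = Num.sqrt (X1 phi).
Proof.
move=> H; rewrite /l2E /X1; congr Num.sqrt.
rewrite (part1 (fun e => `|T12 Phi e| ^+ 2)); apply: eq_bigr => a _.
rewrite -sum_const1; apply: eq_bigr => e /eqP <-; by rewrite (A_inl e H).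
Qed.

Lemma l2E_T21 phi Phi : H1 phi Phi -> l2E (T21 Phi) = Num.sqrt (X2 phi).
Proof.
move=> H; rewrite /l2E /X2; congr Num.sqrt.
rewrite (part2 (fun e => `|T21 Phi e| ^+ 2)); apply: eq_bigr => b _.
rewrite -sum_const2; apply: eq_bigr => e /eqP <-; by rewrite (A_inr e H).
Qed.

Lemma l2V_Lam phi : l2V adj (Lam phi) = Num.sqrt (X1 phi + X2 phi).
Proof. by rewrite /l2V big_sumType. Qed.

Lemma Lam_inr0 phi : (forall a, phi (inl a) = 0) -> forall b, Lam phi (inr b) = 0.
Proof.
move=> H b; rewrite /Lam /Awalk sum_adjR big1 ?scaler0 // => a _.
rewrite H sub0r /Msides [X in _ *: X]big1 ?scaler0 ?oppr0 //.
by move=> -[a'|b'] /= Hs; [rewrite H scaler0 | move: Hs].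
Qed.

Lemma Lam_inl0 phi : (forall b, phi (inr b) = 0) -> forall a, Lam phi (inl a) = 0.
Proof.
move=> H a; rewrite /Lam /Awalk sum_adjL big1 ?scaler0 // => b _.
rewrite H sub0r /Msides [X in _ *: X]big1 ?scaler0 ?oppr0 //.
by move=> -[a'|b'] /= Hs; [move: Hs | rewrite H scaler0].
Qed.


Lemma sum_constZ (P : pred ET) (v : E) :
  \sum_(e | P e) v = (\sum_(e | P e) (1:R)) *: v.
Proof. by rewrite scaler_suml; apply: eq_bigr => *; rewrite scale1r. Qed.

Lemma m_ge0 v : 0 <= m v. Proof. by rewrite ler0n. Qed.

Definition psi2 (Phi : ET -> E) : vt -> E := fun v =>
  match v with inl _ => 0 | inr b => (m (inr b))^-1 *: \sum_(e : ET | (val e).2 == b) Phi e end.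
Definition psi1 (Phi : ET -> E) : vt -> E := fun v =>
  match v with inr _ => 0 | inl a => (m (inl a))^-1 *: \sum_(e : ET | (val e).1 == a) Phi e end.

Lemma avg_sq (P : pred ET) (Phi : ET -> E) (d : R) : d = \sum_(e | P e) 1 ->
  d * `|d^-1 *: \sum_(e | P e) Phi e| ^+ 2 <= \sum_(e | P e) `|Phi e| ^+ 2.
Proof.
move=> Hd.
have S0 : 0 <= \sum_(e | P e) `|Phi e| ^+ 2 by apply: sumr_ge0 => *; apply: sqr_ge0.
have [->|dn0] := eqVneq d 0; first by rewrite mul0r.
have d0 : 0 < d by rewrite lt0r dn0 Hd sumr_ge0.
rewrite normrZ ger0_norm ?invr_ge0 ?(ltW d0) //.
set S := `|_|.
have HS : S <= \sum_(e | P e) `|Phi e| by apply: ler_norm_sum.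
have S0' : 0 <= S by apply: normr_ge0.
have := cs P (fun e => `|Phi e|); rewrite -Hd => Hcs.
have HS2 : S ^+ 2 <= (\sum_(e | P e) `|Phi e|) ^+ 2.
  by apply: lerXn2r; rewrite // nnegrE (le_trans S0').
have -> : d * (d^-1 * S) ^+ 2 = d^-1 * S ^+ 2 by field.
rewrite ler_pdivrMl //; apply: (le_trans HS2); exact: Hcs.
Qed.

Lemma l2V_psi2 Phi : l2V adj (psi2 Phi) <= l2E Phi.
Proof.
rewrite /l2V /l2E ler_sqrt; last by apply: sumr_ge0 => *; apply: sqr_ge0.
rewrite big_sumType /= big1 ?add0r; last by move=> *; rewrite normr0 expr0n /= mulr0.
rewrite (part2 (fun e => `|Phi e| ^+ 2)); apply: ler_sum => b _.
by apply: avg_sq; rewrite cnt2.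
Qed.

Lemma l2V_psi1 Phi : l2V adj (psi1 Phi) <= l2E Phi.
Proof.
rewrite /l2V /l2E ler_sqrt; last by apply: sumr_ge0 => *; apply: sqr_ge0.
rewrite big_sumType /= [X in _ + X]big1 ?addr0; last by move=> *; rewrite normr0 expr0n /= mulr0.
rewrite (part1 (fun e => `|Phi e| ^+ 2)); apply: ler_sum => a _.
by apply: avg_sq; rewrite cnt1.
Qed.

Lemma X1_ge0 phi : 0 <= X1 phi.
Proof. by apply: sumr_ge0 => *; rewrite mulr_ge0 ?m_ge0 ?sqr_ge0. Qed.
Lemma X2_ge0 phi : 0 <= X2 phi.
Proof. by apply: sumr_ge0 => *; rewrite mulr_ge0 ?m_ge0 ?sqr_ge0. Qed.

Lemma Sa_in_Sl Phi : l2E (T12 Phi) = l2V adj (Lam (psi2 Phi)).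
Proof.
rewrite l2V_Lam (l2E_T12 (phi := psi2 Phi)) //.
rewrite /X2 big1 ?addr0 // => b _; by rewrite Lam_inr0 // normr0 expr0n /= mulr0.
Qed.

Lemma Sb_in_Sl Phi : l2E (T21 Phi) = l2V adj (Lam (psi1 Phi)).
Proof.
rewrite l2V_Lam (l2E_T21 (phi := psi1 Phi)) //.
rewrite /X1 big1 ?add0r // => a _; by rewrite Lam_inl0 // normr0 expr0n /= mulr0.
Qed.

Definition U2 (phi : vt -> E) : ET -> E := fun e => phi (inr (val e).2).
Definition U1 (phi : vt -> E) : ET -> E := fun e => phi (inl (val e).1).

Lemma H2_U2 phi : H2 phi (U2 phi).
Proof.
move=> b mn0; rewrite /U2.
have -> : \sum_(e : ET | (val e).2 == b) phi (inr (val e).2) =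
          \sum_(e : ET | (val e).2 == b) phi (inr b).
  by apply: eq_bigr => e /eqP ->.
by rewrite sum_constZ cnt2 scalerA mulVf // scale1r.
Qed.

Lemma H1_U1 phi : H1 phi (U1 phi).
Proof.
move=> a mn0; rewrite /U1.
have -> : \sum_(e : ET | (val e).1 == a) phi (inl (val e).1) =
          \sum_(e : ET | (val e).1 == a) phi (inl a).
  by apply: eq_bigr => e /eqP ->.
by rewrite sum_constZ cnt1 scalerA mulVf // scale1r.
Qed.

Definition N1 (phi : vt -> E) := \sum_a m (inl a) * `|phi (inl a)| ^+ 2.
Definition N2 (phi : vt -> E) := \sum_b m (inr b) * `|phi (inr b)| ^+ 2.

Lemma l2E_U2 phi : l2E (U2 phi) = Num.sqrt (N2 phi).
Proof.
rewrite /l2E /N2 (part2 (fun e => `|U2 phi e| ^+ 2)); congr Num.sqrt.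
apply: eq_bigr => b _; rewrite -sum_const2; apply: eq_bigr => e /eqP <-; by [].
Qed.

Lemma l2E_U1 phi : l2E (U1 phi) = Num.sqrt (N1 phi).
Proof.
rewrite /l2E /N1 (part1 (fun e => `|U1 phi e| ^+ 2)); congr Num.sqrt.
apply: eq_bigr => a _; rewrite -sum_const1; apply: eq_bigr => e /eqP <-; by [].
Qed.

Lemma l2V_N phi : l2V adj phi = Num.sqrt (N1 phi + N2 phi).
Proof. by rewrite /l2V big_sumType. Qed.


Definition sc (k : R) (Phi : ET -> E) : ET -> E := fun e => k *: Phi e.

Lemma P1Z k Phi : P1 (sc k Phi) = sc k (P1 Phi).
Proof. by apply: funext => e; rewrite /P1 /sc -scaler_sumr !scalerA mulrC. Qed.
Lemma P2Z k Phi : P2 (sc k Phi) = sc k (P2 Phi).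
Proof. by apply: funext => e; rewrite /P2 /sc -scaler_sumr !scalerA mulrC. Qed.
Lemma P12Z k Phi : P12 (sc k Phi) = sc k (P12 Phi).
Proof. by apply: funext => e; rewrite /P12 /sc -scaler_sumr !scalerA mulrC. Qed.

Lemma T12Z k Phi : T12 (sc k Phi) = sc k (T12 Phi).
Proof. by apply: funext => e; rewrite /T12 P2Z P1Z P12Z /sc scalerBr. Qed.
Lemma T21Z k Phi : T21 (sc k Phi) = sc k (T21 Phi).
Proof. by apply: funext => e; rewrite /T21 P1Z P2Z P12Z /sc scalerBr. Qed.

Lemma l2EZ k Phi : l2E (sc k Phi) = `|k| * l2E Phi.
Proof.
rewrite /l2E /sc.
under eq_bigr do rewrite normrZ exprMn.
by rewrite -mulr_sumr sqrtrM ?sqr_ge0 // sqrtr_sqr normr_id.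
Qed.

Lemma l2E_ge0 (Phi : ET -> E) : 0 <= l2E Phi. Proof. exact: sqrtr_ge0. Qed.

Lemma l2E_eq0 (Phi : ET -> E) : l2E Phi = 0 -> Phi = sc 0 Phi.
Proof.
move=> H; apply: funext => e; rewrite /sc scale0r.
have S0 : 0 <= \sum_e `|Phi e| ^+ 2 by apply: sumr_ge0 => *; apply: sqr_ge0.
move: H; rewrite /l2E => /eqP; rewrite sqrtr_eq0 => Hle.
have HS : \sum_e `|Phi e| ^+ 2 = 0 by apply/le_anti; rewrite Hle S0.
have := @psumr_eq0P R ET xpredT (fun i => `|Phi i| ^+ 2) (fun i _ => sqr_ge0 _) HS e isT.
by move=> /eqP; rewrite sqrf_eq0 normr_eq0 => /eqP.
Qed.

Lemma l2E0 : l2E (fun _ : ET => (0 : E)) = 0.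
Proof. by rewrite /l2E big1 ?sqrtr0 // => *; rewrite normr0 expr0n. Qed.

Lemma hom_le (T : (ET -> E) -> (ET -> E)) :
  (forall k x, T (sc k x) = sc k (T x)) ->
  has_ubound [set l2E (T x) | x in [set x : ET -> E | l2E x <= 1]] ->
  forall x, l2E (T x) <= opnorm (@l2E _ _ adj R E) T * l2E x.
Proof.
move=> HT Hub x.
have [N0|Nn0] := eqVneq (l2E x) 0.
  rewrite N0 mulr0 (l2E_eq0 N0) HT l2EZ normr0 mul0r //.
have Npos : 0 < l2E x by rewrite lt0r Nn0 l2E_ge0.
set k := (l2E x)^-1.
have k0 : 0 < k by rewrite invr_gt0.
have Hin : [set l2E (T x) | x in [set x : ET -> E | l2E x <= 1]] (l2E (T (sc k x))).
  exists (sc k x) => //=; rewrite l2EZ gtr0_norm // mulVf //.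
have := ub_le_sup Hub Hin; rewrite HT l2EZ gtr0_norm // => H.
rewrite /opnorm; rewrite -ler_pdivrMr //.
by rewrite mulrC.
Qed.

Lemma ball_pt (Phi : ET -> E) : l2E Phi <= 1 -> forall e, `|Phi e| <= 1.
Proof.
move=> H e.
have S0 : 0 <= \sum_e `|Phi e| ^+ 2 by apply: sumr_ge0 => *; apply: sqr_ge0.
have {}H : \sum_e `|Phi e| ^+ 2 <= 1.
  by move: H; rewrite /l2E -{1}sqrtr1 ler_sqrt.
have : `|Phi e| ^+ 2 <= 1.
  apply: le_trans H; rewrite (bigD1 e) //= lerDl; apply: sumr_ge0 => *; apply: sqr_ge0.
have := normr_ge0 (Phi e); nra.
Qed.

Lemma avg_le1 (P : pred ET) (Phi : ET -> E) (d : R) : d = \sum_(e | P e) 1 ->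
  (forall e, `|Phi e| <= 1) -> `|d^-1 *: \sum_(e | P e) Phi e| <= 1.
Proof.
move=> Hd H1'.
rewrite normrZ.
have [->|dn0] := eqVneq d 0; first by rewrite invr0 normr0 mul0r ler01.
have d0 : 0 < d by rewrite lt0r dn0 Hd sumr_ge0.
rewrite ger0_norm ?invr_ge0 ?(ltW d0) //.
rewrite -(mulVf dn0); apply: ler_wpM2l; first by rewrite invr_ge0 ltW.
rewrite Hd; apply: le_trans (ler_norm_sum _ _ _) _; exact: ler_sum.
Qed.

Lemma P1_le1 (Phi : ET -> E) : (forall e, `|Phi e| <= 1) -> forall e, `|P1 Phi e| <= 1.
Proof. by move=> H e; rewrite /P1; apply: avg_le1 => //; rewrite cnt1. Qed.
Lemma P2_le1 (Phi : ET -> E) : (forall e, `|Phi e| <= 1) -> forall e, `|P2 Phi e| <= 1.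
Proof. by move=> H e; rewrite /P2; apply: avg_le1 => //; rewrite cnt2. Qed.
Lemma P12_le1 (Phi : ET -> E) : (forall e, `|Phi e| <= 1) -> forall e, `|P12 Phi e| <= 1.
Proof. by move=> H e; rewrite /P12; apply: (@avg_le1 xpredT) => //; rewrite cardET. Qed.

Lemma crude (T : (ET -> E) -> (ET -> E)) :
  (forall Phi, (forall e, `|Phi e| <= 1) -> forall e, `|T Phi e| <= 2) ->
  has_ubound [set l2E (T x) | x in [set x : ET -> E | l2E x <= 1]].
Proof.
move=> HT; exists (Num.sqrt (\sum_(e : ET) (4:R))) => y [Phi HPhi <-].
rewrite /l2E ler_sqrt; last by apply: sumr_ge0 => *.
apply: ler_sum => e _.
have := HT Phi (ball_pt HPhi) e; have := normr_ge0 (T Phi e); nra.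
Qed.

Lemma crude12 : has_ubound [set l2E (T12 x) | x in [set x : ET -> E | l2E x <= 1]].
Proof.
apply: crude => Phi H e; rewrite /T12.
apply: le_trans (ler_normB _ _) _.
have := P1_le1 (P2_le1 H) e; have := P12_le1 H e; lra.
Qed.
Lemma crude21 : has_ubound [set l2E (T21 x) | x in [set x : ET -> E | l2E x <= 1]].
Proof.
apply: crude => Phi H e; rewrite /T21.
apply: le_trans (ler_normB _ _) _.
have := P2_le1 (P1_le1 H) e; have := P12_le1 H e; lra.
Qed.


Lemma P12P1 (Phi : ET -> E) : P12 (P1 Phi) = P12 Phi.
Proof.
apply: funext => e0; rewrite /P12; congr (_ *: _).
rewrite (part1 (P1 Phi)) (part1 Phi); apply: eq_bigr => a _.
have -> : \sum_(e : ET | (val e).1 == a) P1 Phi e =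
    \sum_(e : ET | (val e).1 == a) ((m (inl a))^-1 *: \sum_(e' : ET | (val e').1 == a) Phi e').
  by apply: eq_bigr => e /eqP Ha; rewrite /P1 Ha.
rewrite sum_constZ cnt1.
have [m0|mn0] := eqVneq (m (inl a)) 0.
  by rewrite m0 scale0r empty_sum // cnt1.
by rewrite scalerA mulfV // scale1r.
Qed.

Lemma P12P2 (Phi : ET -> E) : P12 (P2 Phi) = P12 Phi.
Proof.
apply: funext => e0; rewrite /P12; congr (_ *: _).
rewrite (part2 (P2 Phi)) (part2 Phi); apply: eq_bigr => b _.
have -> : \sum_(e : ET | (val e).2 == b) P2 Phi e =
    \sum_(e : ET | (val e).2 == b) ((m (inr b))^-1 *: \sum_(e' : ET | (val e').2 == b) Phi e').
  by apply: eq_bigr => e /eqP Hb; rewrite /P2 Hb.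
rewrite sum_constZ cnt2.
have [m0|mn0] := eqVneq (m (inr b)) 0.
  by rewrite m0 scale0r empty_sum // cnt2.
by rewrite scalerA mulfV // scale1r.
Qed.

Lemma P1P12 (Phi : ET -> E) : P1 (P12 Phi) = P12 Phi.
Proof.
apply: funext => e; rewrite {1}/P1 {2}/P12 sum_constZ cnt1 scalerA mulVf ?scale1r //.
exact: lt0r_neq0 (m1_gt0 e).
Qed.

Lemma P2P12 (Phi : ET -> E) : P2 (P12 Phi) = P12 Phi.
Proof.
apply: funext => e; rewrite {1}/P2 {2}/P12 sum_constZ cnt2 scalerA mulVf ?scale1r //.
exact: lt0r_neq0 (m2_gt0 e).
Qed.

Lemma l2V0 : l2V adj (fun _ => (0 : E)) = 0.
Proof. by rewrite /l2V big1 ?sqrtr0 // => *; rewrite normr0 expr0n /= mulr0. Qed.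

Lemma main_eq :
  Num.max (opnorm (@l2E _ _ adj R E) T12) (opnorm (@l2E _ _ adj R E) T21) =
  opnorm (@l2V _ _ adj R E) Lam.
Proof.
rewrite /opnorm.
set Sa := [set l2E (T12 x) | x in _].
set Sb := [set l2E (T21 x) | x in _].
set Sl := [set l2V adj (Lam x) | x in _].
have ubA : has_ubound Sa := crude12.
have ubB : has_ubound Sb := crude21.
have inA : Sa (l2E (T12 (fun _ => 0))).
  by exists (fun _ => 0) => //=; rewrite l2E0 ler01.
have inB : Sb (l2E (T21 (fun _ => 0))).
  by exists (fun _ => 0) => //=; rewrite l2E0 ler01.
have sa0 : 0 <= sup Sa by apply: le_trans (ub_le_sup ubA inA); apply: l2E_ge0.
have sb0 : 0 <= sup Sb by apply: le_trans (ub_le_sup ubB inB); apply: l2E_ge0.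
set s := Num.max (sup Sa) (sup Sb).
have sas : sup Sa <= s by rewrite le_max lexx.
have sbs : sup Sb <= s by rewrite le_max lexx orbT.
have ubL : ubound Sl s.
  move=> y [phi Hphi <-].
  rewrite l2V_Lam.
  have hX1 : Num.sqrt (X1 phi) <= sup Sa * Num.sqrt (N2 phi).
    rewrite -(l2E_T12 (H2_U2 phi)) -l2E_U2; exact: hom_le T12Z ubA _.
  have hX2 : Num.sqrt (X2 phi) <= sup Sb * Num.sqrt (N1 phi).
    rewrite -(l2E_T21 (H1_U1 phi)) -l2E_U1; exact: hom_le T21Z ubB _.
  have N10 : 0 <= N1 phi by apply: sumr_ge0 => *; rewrite mulr_ge0 ?m_ge0 ?sqr_ge0.
  have N20 : 0 <= N2 phi by apply: sumr_ge0 => *; rewrite mulr_ge0 ?m_ge0 ?sqr_ge0.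
  have hN : N1 phi + N2 phi <= 1.
    by move: Hphi; rewrite /= l2V_N -{1}sqrtr1 ler_sqrt.
  have qX1 : X1 phi <= sup Sa ^+ 2 * N2 phi.
    rewrite -(sqr_sqrtr (X1_ge0 phi)) -(sqr_sqrtr N20) -exprMn.
    by apply: lerXn2r; rewrite ?nnegrE ?sqrtr_ge0 ?mulr_ge0 ?sqrtr_ge0.
  have qX2 : X2 phi <= sup Sb ^+ 2 * N1 phi.
    rewrite -(sqr_sqrtr (X2_ge0 phi)) -(sqr_sqrtr N10) -exprMn.
    by apply: lerXn2r; rewrite ?nnegrE ?sqrtr_ge0 ?mulr_ge0 ?sqrtr_ge0.
  have s0 : 0 <= s by apply: le_trans sas.
  have qa : sup Sa ^+ 2 <= s ^+ 2 by apply: lerXn2r; rewrite ?nnegrE.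
  have qb : sup Sb ^+ 2 <= s ^+ 2 by apply: lerXn2r; rewrite ?nnegrE.
  rewrite -(ger0_norm s0) -sqrtr_sqr ler_sqrt ?sqr_ge0 //.
  have C0 : 0 <= s ^+ 2 by apply: sqr_ge0.
  have p1 : sup Sa ^+ 2 * N2 phi <= s ^+ 2 * N2 phi by apply: ler_wpM2r.
  have p2 : sup Sb ^+ 2 * N1 phi <= s ^+ 2 * N1 phi by apply: ler_wpM2r.
  have p3 : s ^+ 2 * (N1 phi + N2 phi) <= s ^+ 2 * 1 by apply: ler_wpM2l.
  move: p3; rewrite mulrDr mulr1 => p3.
  lra.
have neL : Sl !=set0.
  by exists (l2V adj (Lam (fun _ => 0))); exists (fun _ => 0) => //=; rewrite l2V0 ler01.
have hasL : has_ubound Sl by exists s.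
apply/le_anti/andP; split.
  rewrite ge_max; apply/andP; split.
    apply: ge_sup; first by exists (l2E (T12 (fun _ => 0))).
    move=> y [Phi HPhi <-].
    have HS : Sl (l2E (T12 Phi)).
      rewrite Sa_in_Sl; exists (psi2 Phi) => //=; exact: le_trans (l2V_psi2 Phi) HPhi.
    exact: ub_le_sup hasL _ HS.
  apply: ge_sup; first by exists (l2E (T21 (fun _ => 0))).
  move=> y [Phi HPhi <-].
  have HS : Sl (l2E (T21 Phi)).
    rewrite Sb_in_Sl; exists (psi1 Phi) => //=; exact: le_trans (l2V_psi1 Phi) HPhi.
  exact: ub_le_sup hasL _ HS.
exact: ge_sup neL ubL.
Qed.

End S.

Theorem proposition2p22 (V1 V2 : finType) (adj : V1 -> V2 -> bool)
  (R : realType) (E : completeNormedModType R) :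
  connected_graph adj ->
  (forall Phi : edgeT adj -> E,
      P12 (P1 Phi) = P12 Phi /\ P1 (P12 Phi) = P12 Phi /\
      P12 (P2 Phi) = P12 Phi /\ P2 (P12 Phi) = P12 Phi) /\
  Num.max
    (opnorm (@l2E _ _ adj R E) (fun Phi => fun e => P1 (P2 Phi) e - P12 Phi e))
    (opnorm (@l2E _ _ adj R E) (fun Phi => fun e => P2 (P1 Phi) e - P12 Phi e))
  = lambda_bip adj E.
Proof.
move=> _; split.
  by move=> Phi; rewrite P12P1 P1P12 P12P2 P2P12.
exact: (main_eq adj E).
Qed.
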